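(* Every 1-cell $f$ in $\mathcal{S}_+$ is isomorphic (in $\mathcal{S}_+$) to a minimal 1-cell $f'$.
   Context: $\mathcal{S}$ is the free symmetric monoidal bicategory on one object (objects generated from a generator and unit by tensor; 1-cells generated by associativity/unit 1-cells and braidings $R_{xy}$, $R^{\cdot}_{xy}$ under composition and tensor; 2-cells generated by all structural 2-cells, including the syllepsis $v_{xy}:R_{yx}R_{xy}\Rightarrow 1$, modulo the symmetric monoidal axioms). $\mathcal{S}_+$ is the sub-bicategory with all objects, the 1-cells containing no generating 1-cell $R^{\cdot}_{xy}$, and the 2-cells obtained by composing and tensoring generating 2-cells of $\mathcal{S}$ with source and target in $\mathcal{S}_+$. The free braided monoidal bicategory $\mathcal{B}$ on one object has the same objects and 1-cells as $\mathcal{S}$; the underlying braid of a 1-cell $f$ is $\rho(f)$, where $\rho:\mathcal{B}\to\mathbf{Br}$ is the strict braided monoidal functor to the braid groups (as a locally discrete braided monoidal bicategory) induced by the universal property. For 1-cells of $\mathcal{S}_+$ this is a positive braid (a word in the generators $\sigma_i$ without inverses). A positive braid, or a 1-cell of $\mathcal{S}_+$, is minimal if (its underlying braid has the property that) no two strands cross twice. *)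

(* Defs.v *)
From mathcomp Require Import all_boot.
From Stdlib Require Import Relations.Relation_Operators.
Set Implicit Arguments. Unset Strict Implicit. Unset Printing Implicit Defensive.

Inductive obj : Type := X | I | T (x y : obj).

(* Conventions:
   A x y z : (x ⊗ y) ⊗ z -> x ⊗ (y ⊗ z),  Ai x y z its adjoint pseudo-inverse;
   L x : I ⊗ x -> x,  Li x : x -> I ⊗ x;  Rr x : x ⊗ I -> x,  Ri x : x -> x ⊗ I;
   B x y = R_{xy} : x ⊗ y -> y ⊗ x;  Bi x y = R^._{xy} : y ⊗ x -> x ⊗ y;
   Comp g f = g ∘ f (first f, then g). *)
Inductive cell : Type :=
| Id (x : obj)
| Comp (g f : cell)
| Tens (f g : cell)
| A (x y z : obj) | Ai (x y z : obj)
| L (x : obj) | Li (x : obj)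
| Rr (x : obj) | Ri (x : obj)
| B (x y : obj) | Bi (x y : obj).

Inductive hom1 : cell -> obj -> obj -> Prop :=
| h_id x : hom1 (Id x) x x
| h_comp g f x y z : hom1 f x y -> hom1 g y z -> hom1 (Comp g f) x z
| h_tens f g x y x' y' : hom1 f x y -> hom1 g x' y' -> hom1 (Tens f g) (T x x') (T y y')
| h_A x y z : hom1 (A x y z) (T (T x y) z) (T x (T y z))
| h_Ai x y z : hom1 (Ai x y z) (T x (T y z)) (T (T x y) z)
| h_L x : hom1 (L x) (T I x) x
| h_Li x : hom1 (Li x) x (T I x)
| h_Rr x : hom1 (Rr x) (T x I) x
| h_Ri x : hom1 (Ri x) x (T x I)
| h_B x y : hom1 (B x y) (T x y) (T y x)
| h_Bi x y : hom1 (Bi x y) (T y x) (T x y).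

Fixpoint plus (f : cell) : bool :=
  match f with
  | Comp g f => plus g && plus f
  | Tens f g => plus f && plus g
  | Bi _ _ => false
  | _ => true
  end.

(* Generating (invertible) structural 2-cells of S, as pairs (source, target).
   Ill-typed instances are discarded later by requiring both sides to be
   well-typed 1-cells with the same source and target. *)
Inductive gen2 : cell -> cell -> Prop :=
| g_assoc h g f : gen2 (Comp h (Comp g f)) (Comp (Comp h g) f)
| g_lunit y f : gen2 (Comp (Id y) f) f
| g_runit x f : gen2 (Comp f (Id x)) f
| g_tcomp g f g' f' : gen2 (Comp (Tens g g') (Tens f f')) (Tens (Comp g f) (Comp g' f'))
| g_tid x y : gen2 (Tens (Id x) (Id y)) (Id (T x y))
| g_A1 x y z : gen2 (Comp (Ai x y z) (A x y z)) (Id (T (T x y) z))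
| g_A2 x y z : gen2 (Comp (A x y z) (Ai x y z)) (Id (T x (T y z)))
| g_L1 x : gen2 (Comp (Li x) (L x)) (Id (T I x))
| g_L2 x : gen2 (Comp (L x) (Li x)) (Id x)
| g_R1 x : gen2 (Comp (Ri x) (Rr x)) (Id (T x I))
| g_R2 x : gen2 (Comp (Rr x) (Ri x)) (Id x)
| g_B1 x y : gen2 (Comp (Bi x y) (B x y)) (Id (T x y))
| g_B2 x y : gen2 (Comp (B x y) (Bi x y)) (Id (T y x))
| g_Anat x y z x' y' z' f g h :
    gen2 (Comp (A x' y' z') (Tens (Tens f g) h)) (Comp (Tens f (Tens g h)) (A x y z))
| g_Ainat x y z x' y' z' f g h :
    gen2 (Comp (Ai x' y' z') (Tens f (Tens g h))) (Comp (Tens (Tens f g) h) (Ai x y z))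
| g_Lnat x y f : gen2 (Comp (L y) (Tens (Id I) f)) (Comp f (L x))
| g_Linat x y f : gen2 (Comp (Li y) f) (Comp (Tens (Id I) f) (Li x))
| g_Rnat x y f : gen2 (Comp (Rr y) (Tens f (Id I))) (Comp f (Rr x))
| g_Rinat x y f : gen2 (Comp (Ri y) f) (Comp (Tens f (Id I)) (Ri x))
| g_Bnat x y x' y' f g : gen2 (Comp (B x' y') (Tens f g)) (Comp (Tens g f) (B x y))
| g_Binat x y x' y' f g : gen2 (Comp (Bi x' y') (Tens g f)) (Comp (Tens f g) (Bi x y))
| g_pent w x y z :
    gen2 (Comp (A w x (T y z)) (A (T w x) y z))
         (Comp (Tens (Id w) (A x y z)) (Comp (A w (T x y) z) (Tens (A w x y) (Id z))))
| g_mu x y : gen2 (Comp (Tens (Id x) (L y)) (A x I y)) (Tens (Rr x) (Id y))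
| g_lam x y : gen2 (Comp (L (T x y)) (A I x y)) (Tens (L x) (Id y))
| g_rho x y : gen2 (Comp (Tens (Id x) (Rr y)) (A x y I)) (Rr (T x y))
| g_hex1 x y z :
    gen2 (B (T x y) z)
         (Comp (A z x y) (Comp (Tens (B x z) (Id y))
            (Comp (Ai x z y) (Comp (Tens (Id x) (B y z)) (A x y z)))))
| g_hex2 x y z :
    gen2 (B x (T y z))
         (Comp (Ai y z x) (Comp (Tens (Id y) (B x z))
            (Comp (A y x z) (Comp (Tens (B x y) (Id z)) (Ai x y z)))))
| g_BI1 x : gen2 (B I x) (Comp (Ri x) (L x))
| g_BI2 x : gen2 (B x I) (Comp (Li x) (Rr x))
| g_syl x y : gen2 (Comp (B y x) (B x y)) (Id (T x y)).

Inductive step : cell -> cell -> Prop :=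
| s_gen f g : gen2 f g -> step f g
| s_compl h f f' : step f f' -> step (Comp h f) (Comp h f')
| s_compr h f f' : step f f' -> step (Comp f h) (Comp f' h)
| s_tensl h f f' : step f f' -> step (Tens h f) (Tens h f')
| s_tensr h f f' : step f f' -> step (Tens f h) (Tens f' h).

Definition step_plus (f g : cell) : Prop :=
  (exists x y, hom1 f x y /\ hom1 g x y) /\ plus f /\ plus g /\ step f g.

Definition iso_plus (f g : cell) : Prop := clos_refl_sym_trans cell step_plus f g.

(* Braid words: (true, i) = sigma_i, (false, i) = sigma_i^{-1}, strands at
   positions i and i+1 (0-based); words read left to right in time. *)
Fixpoint width (x : obj) : nat :=
  match x with X => 1 | I => 0 | T x y => width x + width y end.

Fixpoint src (f : cell) : obj :=
  match f with
  | Id x => x | Comp _ f => src f | Tens f g => T (src f) (src g)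
  | A x y z => T (T x y) z | Ai x y z => T x (T y z)
  | L x => T I x | Li x => x | Rr x => T x I | Ri x => x
  | B x y => T x y | Bi x y => T y x
  end.

(* positive braid in which each of the first m strands crosses over the next n *)
Definition block (m n : nat) : seq (bool * nat) :=
  flatten [seq [seq (true, i + j) | j <- iota 0 n] | i <- rev (iota 0 m)].

Definition binv (w : seq (bool * nat)) : seq (bool * nat) :=
  rev [seq (~~ l.1, l.2) | l <- w].

Definition bshift (k : nat) (w : seq (bool * nat)) : seq (bool * nat) :=
  [seq (l.1, k + l.2) | l <- w].

Fixpoint rho (f : cell) : seq (bool * nat) :=
  match f with
  | Comp g f => rho f ++ rho g
  | Tens f g => rho f ++ bshift (width (src f)) (rho g)
  | B x y => block (width x) (width y)
  | Bi x y => binv (block (width x) (width y))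
  | _ => [::]
  end.

(* The unordered pairs of strands (labelled by initial position) crossing at
   each letter of the word, in order. *)
Fixpoint crossings (p : nat -> nat) (w : seq (bool * nat)) : seq (nat * nat) :=
  match w with
  | [::] => [::]
  | l :: w' =>
      let i := l.2 in
      (minn (p i) (p i.+1), maxn (p i) (p i.+1)) ::
      crossings (fun k => if k == i then p i.+1 else if k == i.+1 then p i else p k) w'
  end.

Definition positive (w : seq (bool * nat)) : bool := all (fun l => l.1) w.

Definition minimal (w : seq (bool * nat)) : bool :=
  positive w && uniq (crossings id w).

(* Main.v *)
Require Import Defs.
From mathcomp Require Import all_boot zify.
From Stdlib Require Import Relations.Relation_Operators Setoid Morphisms.
Set Implicit Arguments. Unset Strict Implicit. Unset Printing Implicit Defensive.

Fixpoint tgt (f : cell) : obj :=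
  match f with
  | Id x => x | Comp g _ => tgt g | Tens f g => T (tgt f) (tgt g)
  | A x y z => T x (T y z) | Ai x y z => T (T x y) z
  | L x => x | Li x => T I x | Rr x => x | Ri x => T x I
  | B x y => T y x | Bi x y => T x y
  end.

Lemma hom1_st f x y : hom1 f x y -> x = src f /\ y = tgt f.
Proof.
elim=> //= {f x y}.
- move=> g f x y z _ [-> ->] _ [e ->]; by [].
- by move=> f g x y x' y' _ [-> ->] _ [-> ->].
Qed.

Lemma hom1_uniq f x y x' y' : hom1 f x y -> hom1 f x' y' -> x = x' /\ y = y'.
Proof. by move=> /hom1_st [-> ->] /hom1_st [-> ->]. Qed.

Definition ty f x y := hom1 f x y /\ plus f.

Lemma iso_ty f g : iso_plus f g -> forall x y, ty f x y <-> ty g x y.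
Proof.
elim=> {f g}.
- move=> f g [[a [b [Ha Hb]]] [pf [pg _]]] x y; split=> [][H p].
  + have [<- <-] := hom1_uniq Ha H; by split.
  + have [<- <-] := hom1_uniq Hb H; by split.
- by [].
- by move=> f g _ IH x y; rewrite IH.
- by move=> f g h _ IH1 _ IH2 x y; rewrite IH1 IH2.
Qed.

Lemma iso_lift (F : cell -> cell) x y x' y' :
  (forall f g, step f g -> step (F f) (F g)) ->
  (forall f, ty f x y -> ty (F f) x' y') ->
  forall f g, ty f x y -> iso_plus f g -> iso_plus (F f) (F g).
Proof.
move=> Hs Ht f g Hf Hi; elim: Hi Hf => {f g}.
- move=> f g Hst Hf; apply: rst_step.
  have Hg : ty g x y by rewrite -(iso_ty (@rst_step _ _ f g Hst)).
  case: Hst => _ [_ [_ st]].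
  have [h1 p1] := Ht _ Hf; have [h2 p2] := Ht _ Hg.
  split; first by exists x', y'. split=> //; split=> //; exact: Hs.
- by move=> *; apply: rst_refl.
- move=> f g Hi IH Hg; apply: rst_sym; apply: IH.
  by rewrite (iso_ty Hi).
- move=> f g h Hi1 IH1 Hi2 IH2 Hf; apply: rst_trans (IH1 Hf) (IH2 _).
  by rewrite -(iso_ty Hi1).
Qed.

Record tc (x y : obj) := TC { tcell : cell; tcP : ty tcell x y }.
Arguments TC {x y} tcell tcP.
Arguments tcell {x y} t.

Definition teq x y (f g : tc x y) := iso_plus (tcell f) (tcell g).
Arguments teq {x y} f g.
Infix "≡" := teq (at level 70).

#[export] Instance teq_equiv x y : Equivalence (@teq x y).
Proof.
split.
- by move=> f; apply: rst_refl.
- by move=> f g H; apply: rst_sym.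
- by move=> f g h H1 H2; apply: rst_trans H1 H2.
Qed.

#[export] Hint Extern 0 (teq _ _) => reflexivity : core.

Program Definition tid x : tc x x := TC (Id x) _.
Next Obligation. by split=> //; constructor. Qed.
Program Definition tcomp x y z (g : tc y z) (f : tc x y) : tc x z := TC (Comp (tcell g) (tcell f)) _.
Next Obligation. case: g f => g [Hg pg] [f [Hf pf]] /=; split; [exact: h_comp Hf Hg | by rewrite /= pg pf]. Qed.
Program Definition ttens x y x' y' (f : tc x y) (g : tc x' y') : tc (T x x') (T y y') := TC (Tens (tcell f) (tcell g)) _.
Next Obligation. case: g f => g [Hg pg] [f [Hf pf]] /=; split; [exact: h_tens Hf Hg | by rewrite /= pg pf]. Qed.
Program Definition tA x y z : tc (T (T x y) z) (T x (T y z)) := TC (A x y z) _.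
Next Obligation. by split=> //; constructor. Qed.
Program Definition tAi x y z : tc (T x (T y z)) (T (T x y) z) := TC (Ai x y z) _.
Next Obligation. by split=> //; constructor. Qed.
Program Definition tL x : tc (T I x) x := TC (L x) _.
Next Obligation. by split=> //; constructor. Qed.
Program Definition tLi x : tc x (T I x) := TC (Li x) _.
Next Obligation. by split=> //; constructor. Qed.
Program Definition tR x : tc (T x I) x := TC (Rr x) _.
Next Obligation. by split=> //; constructor. Qed.
Program Definition tRi x : tc x (T x I) := TC (Ri x) _.
Next Obligation. by split=> //; constructor. Qed.
Program Definition tB x y : tc (T x y) (T y x) := TC (B x y) _.
Next Obligation. by split=> //; constructor. Qed.
Arguments tcomp {x y z} g f.
Arguments ttens {x y x' y'} f g.

Infix "∘" := tcomp (at level 40, left associativity).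
Infix "⊗" := ttens (at level 35, right associativity).

#[export] Instance tcomp_proper x y z : Proper (@teq y z ==> @teq x y ==> @teq x z) (@tcomp x y z).
Proof.
move=> g g' Hg f f' Hf; rewrite /teq /=.
apply: (@rst_trans _ _ _ (Comp (tcell g) (tcell f'))).
- apply: (@iso_lift (fun u => Comp (tcell g) u) x y x z) => //.
  + by move=> *; apply: s_compl.
  + move=> u [Hu pu]; case: g {Hg} => g [H p] /=; split; [exact: h_comp Hu H| by rewrite /= p pu].
  + exact: tcP.
- apply: (@iso_lift (fun u => Comp u (tcell f')) y z x z) => //.
  + by move=> *; apply: s_compr.
  + move=> u [Hu pu]; case: f' {Hf} => f' [H p] /=; split; [exact: h_comp H Hu| by rewrite /= p pu].
  + exact: tcP.
Qed.

#[export] Instance ttens_proper x y x' y' : Proper (@teq x y ==> @teq x' y' ==> @teq (T x x') (T y y')) (@ttens x y x' y').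
Proof.
move=> f f' Hf g g' Hg; rewrite /teq /=.
apply: (@rst_trans _ _ _ (Tens (tcell f) (tcell g'))).
- apply: (@iso_lift (fun u => Tens (tcell f) u) x' y' (T x x') (T y y')) => //.
  + by move=> *; apply: s_tensl.
  + move=> u [Hu pu]; case: f {Hf} => f [H p] /=; split; [exact: h_tens H Hu| by rewrite /= p pu].
  + exact: tcP.
- apply: (@iso_lift (fun u => Tens u (tcell g')) x y (T x x') (T y y')) => //.
  + by move=> *; apply: s_tensr.
  + move=> u [Hu pu]; case: g' {Hg} => g' [H p] /=; split; [exact: h_tens Hu H| by rewrite /= p pu].
  + exact: tcP.
Qed.

Lemma gen_teq x y (f g : tc x y) : gen2 (tcell f) (tcell g) -> f ≡ g.
Proof.
move=> H; apply: rst_step; case: f H => f [Hf pf]; case: g => g [Hg pg] /= H.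
split; first by exists x, y. by split=> //; split=> //; constructor.
Qed.

Lemma raw_teq x y (f g : tc x y) : tcell f = tcell g -> f ≡ g.
Proof. by move=> e; rewrite /teq e; apply: rst_refl. Qed.

Section Basic.
Implicit Types (x y z w : obj).

Lemma assoc x y z w (h : tc z w) (g : tc y z) (f : tc x y) : h ∘ (g ∘ f) ≡ h ∘ g ∘ f.
Proof. apply: gen_teq; exact: g_assoc. Qed.
Lemma id_l x y (f : tc x y) : tid y ∘ f ≡ f.
Proof. apply: gen_teq; exact: g_lunit. Qed.
Lemma id_r x y (f : tc x y) : f ∘ tid x ≡ f.
Proof. apply: gen_teq; exact: g_runit. Qed.
Lemma interch x y z x' y' z' (g : tc y z) (f : tc x y) (g' : tc y' z') (f' : tc x' y') :
  (g ⊗ g') ∘ (f ⊗ f') ≡ (g ∘ f) ⊗ (g' ∘ f').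
Proof. apply: gen_teq; exact: g_tcomp. Qed.
Lemma tid_tens x y : tid x ⊗ tid y ≡ tid (T x y).
Proof. apply: gen_teq; exact: g_tid. Qed.
Lemma AiA x y z : tAi x y z ∘ tA x y z ≡ tid _.
Proof. apply: gen_teq; exact: g_A1. Qed.
Lemma AAi x y z : tA x y z ∘ tAi x y z ≡ tid _.
Proof. apply: gen_teq; exact: g_A2. Qed.
Lemma LiL x : tLi x ∘ tL x ≡ tid _.
Proof. apply: gen_teq; exact: g_L1. Qed.
Lemma LLi x : tL x ∘ tLi x ≡ tid _.
Proof. apply: gen_teq; exact: g_L2. Qed.
Lemma RiR x : tRi x ∘ tR x ≡ tid _.
Proof. apply: gen_teq; exact: g_R1. Qed.
Lemma RRi x : tR x ∘ tRi x ≡ tid _.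
Proof. apply: gen_teq; exact: g_R2. Qed.
Lemma natA x y z x' y' z' (f : tc x x') (g : tc y y') (h : tc z z') :
  tA x' y' z' ∘ ((f ⊗ g) ⊗ h) ≡ (f ⊗ (g ⊗ h)) ∘ tA x y z.
Proof. apply: gen_teq; exact: g_Anat. Qed.
Lemma natAi x y z x' y' z' (f : tc x x') (g : tc y y') (h : tc z z') :
  tAi x' y' z' ∘ (f ⊗ (g ⊗ h)) ≡ ((f ⊗ g) ⊗ h) ∘ tAi x y z.
Proof. apply: gen_teq; exact: g_Ainat. Qed.
Lemma natL x y (f : tc x y) : tL y ∘ (tid I ⊗ f) ≡ f ∘ tL x.
Proof. apply: gen_teq; exact: g_Lnat. Qed.
Lemma natLi x y (f : tc x y) : tLi y ∘ f ≡ (tid I ⊗ f) ∘ tLi x.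
Proof. apply: gen_teq; exact: g_Linat. Qed.
Lemma natR x y (f : tc x y) : tR y ∘ (f ⊗ tid I) ≡ f ∘ tR x.
Proof. apply: gen_teq; exact: g_Rnat. Qed.
Lemma natRi x y (f : tc x y) : tRi y ∘ f ≡ (f ⊗ tid I) ∘ tRi x.
Proof. apply: gen_teq; exact: g_Rinat. Qed.
Lemma natB x y x' y' (f : tc x x') (g : tc y y') : tB x' y' ∘ (f ⊗ g) ≡ (g ⊗ f) ∘ tB x y.
Proof. apply: gen_teq; exact: g_Bnat. Qed.
Lemma pent w x y z : tA w x (T y z) ∘ tA (T w x) y z ≡
  (tid w ⊗ tA x y z) ∘ (tA w (T x y) z ∘ (tA w x y ⊗ tid z)).
Proof. apply: gen_teq; exact: g_pent. Qed.
Lemma tri_mu x y : (tid x ⊗ tL y) ∘ tA x I y ≡ tR x ⊗ tid y.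
Proof. apply: gen_teq; exact: g_mu. Qed.
Lemma tri_lam x y : tL (T x y) ∘ tA I x y ≡ tL x ⊗ tid y.
Proof. apply: gen_teq; exact: g_lam. Qed.
Lemma tri_rho x y : (tid x ⊗ tR y) ∘ tA x y I ≡ tR (T x y).
Proof. apply: gen_teq; exact: g_rho. Qed.
Lemma hex1 x y z : tB (T x y) z ≡
  tA z x y ∘ ((tB x z ⊗ tid y) ∘ (tAi x z y ∘ ((tid x ⊗ tB y z) ∘ tA x y z))).
Proof. apply: gen_teq; exact: g_hex1. Qed.
Lemma hex2 x y z : tB x (T y z) ≡
  tAi y z x ∘ ((tid y ⊗ tB x z) ∘ (tA y x z ∘ ((tB x y ⊗ tid z) ∘ tAi x y z))).
Proof. apply: gen_teq; exact: g_hex2. Qed.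
Lemma BI1 x : tB I x ≡ tRi x ∘ tL x.
Proof. apply: gen_teq; exact: g_BI1. Qed.
Lemma BI2 x : tB x I ≡ tLi x ∘ tR x.
Proof. apply: gen_teq; exact: g_BI2. Qed.
Lemma syl x y : tB y x ∘ tB x y ≡ tid _.
Proof. apply: gen_teq; exact: g_syl. Qed.

End Basic.

Lemma cont x y z w (a : tc y z) (b : tc x y) (c : tc x z) (k : tc w x) :
  a ∘ b ≡ c -> a ∘ (b ∘ k) ≡ c ∘ k.
Proof. by move=> H; rewrite assoc H. Qed.
Arguments cont {x y z w a b c k}.

Lemma tens_compl x y z w (g : tc y z) (f : tc x y) : (g ∘ f) ⊗ tid w ≡ (g ⊗ tid w) ∘ (f ⊗ tid w).
Proof. by rewrite interch id_l. Qed.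
Lemma tens_compr x y z w (g : tc y z) (f : tc x y) : tid w ⊗ (g ∘ f) ≡ (tid w ⊗ g) ∘ (tid w ⊗ f).
Proof. by rewrite interch id_l. Qed.
Lemma tens_comprV x y z w (g : tc y z) (f : tc x y) : (tid w ⊗ g) ∘ (tid w ⊗ f) ≡ tid w ⊗ (g ∘ f).
Proof. by rewrite tens_compr. Qed.
Lemma tens_complV x y z w (g : tc y z) (f : tc x y) : (g ⊗ tid w) ∘ (f ⊗ tid w) ≡ (g ∘ f) ⊗ tid w.
Proof. by rewrite tens_compl. Qed.
Lemma tens_split x y x' y' (f : tc x y) (g : tc x' y') : f ⊗ g ≡ (f ⊗ tid y') ∘ (tid x ⊗ g).
Proof. by rewrite interch id_l id_r. Qed.
Lemma tens_split' x y x' y' (f : tc x y) (g : tc x' y') : f ⊗ g ≡ (tid y ⊗ g) ∘ (f ⊗ tid x').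
Proof. by rewrite interch id_l id_r. Qed.

Lemma retype_ty x y x' y' (e1 : x = x') (e2 : y = y') (f : tc x y) : ty (tcell f) x' y'.
Proof. by case: _ / e1; case: _ / e2; exact: tcP. Qed.
Definition retype x y x' y' (e1 : x = x') (e2 : y = y') (f : tc x y) : tc x' y' :=
  TC (tcell f) (retype_ty e1 e2 f).

#[export] Instance retype_proper x y x' y' e1 e2 : Proper (@teq x y ==> @teq x' y') (@retype x y x' y' e1 e2).
Proof. by move=> f g. Qed.

Fixpoint C (n : nat) : obj := match n with 0 => I | S n => T X (C n) end.

Fixpoint cat m k : tc (T (C m) (C k)) (C (m + k)) :=
  match m return tc (T (C m) (C k)) (C (m + k)) with
  | 0 => tL (C k)
  | S m' => (tid X ⊗ cat m' k) ∘ tA X (C m') (C k)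
  end.

Fixpoint uncat m k : tc (C (m + k)) (T (C m) (C k)) :=
  match m return tc (C (m + k)) (T (C m) (C k)) with
  | 0 => tLi (C k)
  | S m' => tAi X (C m') (C k) ∘ (tid X ⊗ uncat m' k)
  end.

Lemma cat_uncat m k : cat m k ∘ uncat m k ≡ tid _.
Proof.
elim: m => [|m IH] /=; first exact: LLi.
by rewrite -!assoc (cont (AAi _ _ _)) id_l -tens_compr IH tid_tens.
Qed.

Lemma uncat_cat m k : uncat m k ∘ cat m k ≡ tid _.
Proof.
elim: m => [|m IH] /=; first exact: LiL.
by rewrite -!assoc (cont (tens_comprV _ _ _)) IH tid_tens id_l AiA.
Qed.

Fixpoint nrm x : tc x (C (width x)) :=
  match x return tc x (C (width x)) with
  | X => tRi X
  | I => tid I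
  | T a b => cat (width a) (width b) ∘ (nrm a ⊗ nrm b)
  end.

Fixpoint dnm x : tc (C (width x)) x :=
  match x return tc (C (width x)) x with
  | X => tR X
  | I => tid I
  | T a b => (dnm a ⊗ dnm b) ∘ uncat (width a) (width b)
  end.

Lemma dn x : dnm x ∘ nrm x ≡ tid x.
Proof.
elim: x => [||a IHa b IHb] /=; [exact: RRi| exact: id_l|].
by rewrite -!assoc (cont (uncat_cat _ _)) id_l interch IHa IHb tid_tens.
Qed.

Lemma nd x : nrm x ∘ dnm x ≡ tid _.
Proof.
elim: x => [||a IHa b IHb] /=; [exact: RiR| exact: id_l|].
by rewrite -!assoc (cont (interch _ _ _ _)) IHa IHb tid_tens id_l cat_uncat.
Qed.

Lemma heq_of x y x' y' (u v : tc x y) (u' v' : tc x' y') :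
  tcell u = tcell u' -> tcell v = tcell v' -> u ≡ v -> u' ≡ v'.
Proof. by rewrite /teq => <- <-. Qed.

Lemma tens_facr x y x' y' z' (f : tc x y) (g : tc y' z') (h : tc x' y') :
  f ⊗ (g ∘ h) ≡ (tid y ⊗ g) ∘ (f ⊗ h).
Proof. by rewrite interch id_l. Qed.
Lemma tens_facl x y z x' y' (f : tc x' y') (g : tc y z) (h : tc x y) :
  (g ∘ h) ⊗ f ≡ (g ⊗ tid y') ∘ (h ⊗ f).
Proof. by rewrite interch id_l. Qed.

Lemma unit_cancel x y (f g : tc x y) : f ⊗ tid I ≡ g ⊗ tid I -> f ≡ g.
Proof.
move=> H.
have E (u : tc x y) : u ≡ tR y ∘ (u ⊗ tid I) ∘ tRi x.
  by rewrite natR -assoc RRi id_r.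
by rewrite (E f) H -E.
Qed.

Lemma LI_RI : tL I ≡ tR I.
Proof.
have h1 : tid I ⊗ tL I ≡ tL (T I I).
  have e := natL (tL I).
  have : tLi I ∘ (tL I ∘ (tid I ⊗ tL I)) ≡ tLi I ∘ (tL I ∘ tL (T I I)) by rewrite e.
  by rewrite !assoc LiL !id_l.
apply: unit_cancel; by rewrite -tri_mu h1 tri_lam.
Qed.

Lemma catR m : cat m 0 ≡ retype (erefl _) (esym (congr1 C (addn0 m))) (tR (C m)).
Proof.
elim: m => [|m IH] /=.
- apply: (heq_of (u := tL I) (v := tR I)) => //; exact: LI_RI.
- rewrite IH.
  apply: (heq_of (u := (tid X ⊗ tR (C m)) ∘ tA X (C m) I) (v := tR (T X (C m)))) => //.
  exact: tri_rho.
Qed.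

Lemma catcA a b c : cat a (b + c) ∘ (tid (C a) ⊗ cat b c) ∘ tA (C a) (C b) (C c) ≡
  retype (erefl _) (congr1 C (esym (addnA a b c))) (cat (a + b) c ∘ (cat a b ⊗ tid (C c))).
Proof.
elim: a => [|a IH] /=.
- apply: (heq_of (u := tL (C (b + c)) ∘ (tid I ⊗ cat b c) ∘ tA I (C b) (C c))
                 (v := cat b c ∘ (tL (C b) ⊗ tid (C c)))) => //.
  by rewrite natL -assoc tri_lam.
- rewrite -(tid_tens X (C a)) -!assoc (cont (natA _ _ _)) -!assoc (cont (tens_comprV _ _ _)).
  rewrite pent (cont (tens_comprV _ _ _)) IH.
  rewrite (tens_facl (tid (C c)) (tid X ⊗ cat a b)).
  rewrite (cont (natA _ _ _)) -!assoc (cont (tens_comprV _ _ _)).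
  by apply: raw_teq.
Qed.

Fixpoint tsig (i n : nat) {struct i} : tc (C n) (C n) :=
  match i with
  | 0 => match n return tc (C n) (C n) with
         | S (S c) => tA X X (C c) ∘ ((tB X X ⊗ tid (C c)) ∘ tAi X X (C c))
         | n' => tid (C n') end
  | S i' => match n return tc (C n) (C n) with
         | S n' => tid X ⊗ tsig i' n'
         | 0 => tid I end
  end.

Fixpoint tW n (w : seq nat) : tc (C n) (C n) :=
  match w with [::] => tid (C n) | i :: w' => tW n w' ∘ tsig i n end.

Lemma tW_cat n u v : tW n (u ++ v) ≡ tW n v ∘ tW n u.
Proof. elim: u => [|i u IH] /=; first by rewrite id_r. by rewrite IH assoc. Qed.

Lemma pent2 w x y z : tA (T w x) y z ∘ (tAi w x y ⊗ tid z) ≡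
  tAi w x (T y z) ∘ ((tid w ⊗ tA x y z) ∘ tA w (T x y) z).
Proof.
transitivity (tAi w x (T y z) ∘ (tA w x (T y z) ∘ (tA (T w x) y z ∘ (tAi w x y ⊗ tid z)))).
  by rewrite assoc AiA id_l.
rewrite (assoc (tA w x _)) pent -?assoc tens_complV AAi tid_tens id_r.
by [].
Qed.

Lemma cont3 x y z w v (a : tc z w) (b : tc y z) (c : tc x y) (d : tc x w) (k : tc v x) :
  a ∘ (b ∘ c) ≡ d -> a ∘ (b ∘ (c ∘ k)) ≡ d ∘ k.
Proof. by move=> H; rewrite (assoc b) assoc H. Qed.
Arguments cont3 {x y z w v a b c d k}.

Lemma swap_tens x y x' y' (f : tc x y) (g : tc x' y') :
  (tid y ⊗ g) ∘ (f ⊗ tid x') ≡ (f ⊗ tid y') ∘ (tid x ⊗ g).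
Proof. by rewrite !interch !id_l !id_r. Qed.

Lemma catsR m k j : cat m k ∘ (tid (C m) ⊗ tsig j k) ≡ tsig (m + j) (m + k) ∘ cat m k.
Proof.
elim: m => [|m IH] /=; first exact: natL.
rewrite ?addSn /= -(tid_tens X (C m)) -?assoc natA -?assoc.
by rewrite (cont (tens_comprV _ _ _)) IH tens_compr assoc.
Qed.

Lemma catsL m k i : i.+2 <= m -> cat m k ∘ (tsig i m ⊗ tid (C k)) ≡ tsig i (m + k) ∘ cat m k.
Proof.
elim: m i => [|m IH] [|i] //= Hi.
- case: m IH Hi => [|c] // _ _ /=.
  rewrite ?addSn /= !tens_compl tens_compr -?assoc.
  rewrite (cont3 (symmetry (pent _ _ _ _))) -?assoc (cont (natA _ _ _)) tid_tens -?assoc.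
  rewrite (cont (symmetry (natA _ _ _))) -?assoc.
  rewrite (tid_tens X X) (cont (swap_tens _ _)) -?assoc -(tid_tens X X).
  apply: tcomp_proper => //; apply: tcomp_proper => //.
  rewrite pent2 -?assoc (cont (symmetry (natAi _ _ _))) -?assoc.
  by [].
- rewrite ?addSn /= -?assoc natA -?assoc (cont (tens_comprV _ _ _)) IH //.
  by rewrite tens_compr assoc.
Qed.

Definition vw n (w : seq nat) := all (fun i => i.+2 <= n) w.

Lemma catWL m k u : vw m u -> cat m k ∘ (tW m u ⊗ tid (C k)) ≡ tW (m + k) u ∘ cat m k.
Proof.
elim: u => [|i u IH] /=; first by rewrite tid_tens id_r id_l.
by case/andP=> Hi Hu; rewrite tens_compl assoc IH // -assoc catsL // assoc.
Qed.

Lemma catWR m k v : cat m k ∘ (tid (C m) ⊗ tW k v) ≡ tW (m + k) (map (addn m) v) ∘ cat m k.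
Proof.
elim: v => [|j v IH] /=; first by rewrite tid_tens id_r id_l.
by rewrite tens_compr assoc IH -assoc catsR assoc.
Qed.

Lemma catW m k u v : vw m u ->
  cat m k ∘ (tW m u ⊗ tW k v) ≡ tW (m + k) (map (addn m) v ++ u) ∘ cat m k.
Proof.
move=> Hu; rewrite tens_split assoc catWL // -assoc catWR assoc tW_cat.
by [].
Qed.

Lemma vw_cat n u v : vw n (u ++ v) = vw n u && vw n v.
Proof. by rewrite /vw all_cat. Qed.

Lemma vw_shift m k u v : vw m u -> vw k v -> vw (m + k) (map (addn m) v ++ u).
Proof.
move=> Hu Hv; rewrite vw_cat; apply/andP; split.
- rewrite /vw all_map; apply/allP=> j Hj /=; move/allP: Hv => /(_ j Hj) Hj'.
  by rewrite -!addnS leq_add2l.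
- apply/allP=> i Hi; move/allP: Hu => /(_ i Hi) Hi'; exact: leq_trans Hi' (leq_addr _ _).
Qed.

Definition Dec x y (f : tc x y) := exists n w (NX : tc x (C n)) (DY : tc (C n) y),
  [/\ tcell NX = tcell (nrm x), tcell DY = tcell (dnm y), vw n w & f ≡ DY ∘ tW n w ∘ NX].

Lemma Dec_teq x y (f g : tc x y) : f ≡ g -> Dec f -> Dec g.
Proof.
move=> H [n [w [NX [DY [h1 h2 h3 h4]]]]]; exists n, w, NX, DY; split=> //.
by rewrite -H.
Qed.

Lemma C_inj : injective C.
Proof. by elim=> [|n IH] [|m] //= [] /IH ->. Qed.

Lemma widthN x n (NX : tc x (C n)) : tcell NX = tcell (nrm x) -> n = width x.
Proof.
move=> e; case: NX e => c [Hc _] /= e; subst c.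
have [_ /C_inj <-] := hom1_uniq Hc (proj1 (tcP (nrm x))); by [].
Qed.

Lemma widthD x n (DX : tc (C n) x) : tcell DX = tcell (dnm x) -> n = width x.
Proof.
move=> e; case: DX e => c [Hc _] /= e; subst c.
have [/C_inj <- _] := hom1_uniq Hc (proj1 (tcP (dnm x))); by [].
Qed.

Lemma nd' x n (NX : tc x (C n)) (DX : tc (C n) x) :
  tcell NX = tcell (nrm x) -> tcell DX = tcell (dnm x) -> NX ∘ DX ≡ tid _.
Proof.
move=> e1 e2; have E := widthN e1; subst n.
by apply: (heq_of (u := nrm x ∘ dnm x) (v := tid _)) => //=; [rewrite e1 e2| exact: nd].
Qed.

Lemma dn' x n (NX : tc x (C n)) (DX : tc (C n) x) :
  tcell NX = tcell (nrm x) -> tcell DX = tcell (dnm x) -> DX ∘ NX ≡ tid _.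
Proof.
move=> e1 e2; have E := widthN e1; subst n.
by apply: (heq_of (u := dnm x ∘ nrm x) (v := tid _)) => //=; [rewrite e1 e2| exact: dn].
Qed.

Lemma Dec_comp x y z (f : tc x y) (g : tc y z) : Dec f -> Dec g -> Dec (g ∘ f).
Proof.
move=> [n [w1 [NX [DY [h1 h2 h3 h4]]]]] [n' [w2 [NY [DZ [k1 k2 k3 k4]]]]].
have E : n' = n by rewrite (widthN k1) (widthD h2).
subst n'.
exists n, (w1 ++ w2), NX, DZ; split=> //; first by rewrite vw_cat h3 k3.
rewrite h4 k4 tW_cat.
transitivity (DZ ∘ tW n w2 ∘ (NY ∘ DY) ∘ tW n w1 ∘ NX).
  by rewrite !assoc.
by rewrite nd' // id_r !assoc.
Qed.

Lemma Dec_tens x y x' y' (f : tc x y) (g : tc x' y') : Dec f -> Dec g -> Dec (f ⊗ g).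
Proof.
move=> [m [u [NX [DY [h1 h2 h3 h4]]]]] [k [v [NX' [DY' [k1 k2 k3 k4]]]]].
exists (m + k), (map (addn m) v ++ u), (cat m k ∘ (NX ⊗ NX')), ((DY ⊗ DY') ∘ uncat m k).
split.
- by rewrite /= h1 k1 (widthN h1) (widthN k1).
- by rewrite /= h2 k2 (widthD h2) (widthD k2).
- exact: vw_shift.
- rewrite h4 k4 -!interch.
  transitivity ((DY ⊗ DY') ∘ (uncat m k ∘ cat m k) ∘ (tW m u ⊗ tW k v) ∘ (NX ⊗ NX')).
    by rewrite uncat_cat id_r.
  by rewrite -!assoc (assoc (cat m k)) catW // !assoc.
Qed.

Lemma Dec_id x : Dec (tid x).
Proof.
exists (width x), [::], (nrm x), (dnm x); split=> //=.
by rewrite id_r dn.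
Qed.

Lemma Dec0 x y (f : tc x y) n (NX : tc x (C n)) (DY : tc (C n) y) :
  tcell NX = tcell (nrm x) -> tcell DY = tcell (dnm y) -> f ≡ DY ∘ NX -> Dec f.
Proof. move=> h1 h2 h3; exists n, [::], NX, DY; split=> //=; by rewrite id_r. Qed.

Lemma Dec_inv x y (f : tc x y) (g : tc y x) n (NX : tc x (C n)) (DY : tc (C n) y) :
  tcell NX = tcell (nrm x) -> tcell DY = tcell (dnm y) -> f ≡ DY ∘ NX -> f ∘ g ≡ tid y -> Dec g.
Proof.
move=> h1 h2 h3 h4.
have e := widthD h2; subst n.
have e' := widthN h1.
apply: (@Dec0 _ _ _ _ (nrm y) (retype (congr1 C (esym e')) (erefl _) (dnm x))) => //.
have E1 : retype (congr1 C (esym e')) (erefl x) (dnm x) ∘ NX ≡ tid _.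
  by apply: dn'.
transitivity (retype (congr1 C (esym e')) (erefl x) (dnm x) ∘ NX ∘ g); first by rewrite E1 id_l.
rewrite -assoc; apply: tcomp_proper => //.
transitivity (nrm y ∘ DY ∘ NX ∘ g); first by rewrite nd' // id_l.
by rewrite -(assoc _ DY) -h3 -assoc h4 id_r.
Qed.

Lemma nrmA x y z : nrm (T x (T y z)) ∘ tA x y z ≡
  retype (erefl _) (congr1 C (esym (addnA _ _ _))) (nrm (T (T x y) z)).
Proof.
rewrite /= tens_facr -?assoc -(natA (nrm x) (nrm y) (nrm z)) !assoc catcA.
rewrite (tens_facl (nrm z) (cat _ _) (nrm x ⊗ nrm y)) assoc.
by apply: raw_teq.
Qed.

Lemma Dec_A x y z : Dec (tA x y z).
Proof.
apply: (@Dec0 _ _ _ _ (nrm (T (T x y) z))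
   (retype (congr1 C (addnA _ _ _)) (erefl _) (dnm (T x (T y z))))) => //.
transitivity (dnm (T x (T y z)) ∘ (nrm (T x (T y z)) ∘ tA x y z)).
  by rewrite assoc dn id_l.
rewrite nrmA; by apply: raw_teq.
Qed.

Lemma Dec_Ai x y z : Dec (tAi x y z).
Proof.
apply: (@Dec_inv _ _ (tA x y z) _ _ (nrm (T (T x y) z))
   (retype (congr1 C (addnA _ _ _)) (erefl _) (dnm (T x (T y z))))) => //; last exact: AAi.
transitivity (dnm (T x (T y z)) ∘ (nrm (T x (T y z)) ∘ tA x y z)).
  by rewrite assoc dn id_l.
rewrite nrmA; by apply: raw_teq.
Qed.

Lemma Dec_L x : Dec (tL x).
Proof.
apply: (@Dec0 _ _ _ _ (nrm (T I x)) (dnm x)) => //=.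
by rewrite natL assoc dn id_l.
Qed.

Lemma Dec_Li x : Dec (tLi x).
Proof.
apply: (@Dec_inv _ _ (tL x) _ _ (nrm (T I x)) (dnm x)) => //=; last exact: LLi.
by rewrite natL assoc dn id_l.
Qed.

Lemma R_eq x : tR x ≡ retype (congr1 C (esym (addn0 _))) (erefl _) (dnm x) ∘ nrm (T x I).
Proof.
rewrite /= catR.
apply: (heq_of (u := tR x) (v := dnm x ∘ (tR (C (width x)) ∘ (nrm x ⊗ tid I)))) => //.
by rewrite natR assoc dn id_l.
Qed.

Lemma Dec_R x : Dec (tR x).
Proof. exact: (Dec0 _ _ (R_eq x)). Qed.

Lemma Dec_Ri x : Dec (tRi x).
Proof. apply: (Dec_inv _ _ (R_eq x)) => //; exact: RRi. Qed.

Lemma tri_rhoi x y : tAi x y I ∘ (tid x ⊗ tRi y) ≡ tRi (T x y).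
Proof.
transitivity (tRi (T x y) ∘ tR (T x y) ∘ tAi x y I ∘ (tid x ⊗ tRi y)).
  by rewrite RiR id_l.
rewrite -tri_rho -!assoc (cont (AAi _ _ _)) id_l tens_comprV RRi tid_tens id_r.
by [].
Qed.

Lemma nrmXX : nrm (T X X) ≡ tid X ⊗ tRi X.
Proof. by rewrite /= tri_mu interch RRi id_l. Qed.

Lemma dnmXX : dnm (T X X) ≡ tid X ⊗ tR X.
Proof.
transitivity (dnm (T X X) ∘ (nrm (T X X) ∘ (tid X ⊗ tR X))).
  by rewrite nrmXX tens_comprV RiR tid_tens id_r.
by rewrite assoc dn id_l.
Qed.

Lemma Dec_BXX : Dec (tB X X).
Proof.
exists 2, [:: 0], (nrm (T X X)), (dnm (T X X)); split=> //.
rewrite nrmXX dnmXX /= id_l -?assoc tri_rhoi -(natRi (tB X X)) (cont (tri_rho _ _)).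
by rewrite assoc RRi id_l.
Qed.

Fixpoint sz x := match x with T a b => sz a + sz b + 1 | _ => 1 end.
Fixpoint mu c := match c with
  | Comp g f => mu g + mu f + 1 | Tens f g => mu f + mu g + 1
  | B x y => 16 * (sz x * sz y) | _ => 1 end.

Lemma sz_pos x : 0 < sz x.
Proof. case: x => //= a b; by rewrite addn1. Qed.

Lemma ty_comp_inv c1 c2 x y : ty (Comp c1 c2) x y -> exists m, ty c2 x m /\ ty c1 m y.
Proof. case=> H /= /andP [p1 p2]; inversion H; subst; by exists y0. Qed.

Lemma ty_tens_inv c1 c2 x y : ty (Tens c1 c2) x y ->
  exists a b a' b', [/\ x = T a a', y = T b b', ty c1 a b & ty c2 a' b'].
Proof. case=> H /= /andP [p1 p2]; inversion H; subst; by exists x0, y0, x', y'. Qed.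

Lemma Dec_raw x y (f g : tc x y) : tcell f = tcell g -> Dec g -> Dec f.
Proof. by move=> e; apply: Dec_teq; apply: raw_teq. Qed.

Lemma Dec_all N : forall x y (f : tc x y), mu (tcell f) < N -> Dec f.
Proof.
elim: N => [//|N IH] x y [c H] /=; rewrite ltnS => Hmu.
have IH' x' y' (E : tc x' y') : mu (tcell E) < mu c -> Dec E.
  by move=> h; apply: IH; exact: leq_trans h Hmu.
case: c H Hmu IH' => [a|c1 c2|c1 c2|a b d|a b d|a|a|a|a|a b|a b] H Hmu IH'.
- have [e1 e2] := hom1_st (proj1 H); simpl in e1, e2; subst.
  by apply: (Dec_raw (g := tid a)) => //; exact: Dec_id.
- have [m [H2 H1]] := ty_comp_inv H.
  apply: (Dec_raw (g := TC c1 H1 ∘ TC c2 H2)) => //.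
  apply: Dec_comp; apply: IH' => /=; lia.
- have [a [b [a' [b' [e1 e2 H1 H2]]]]] := ty_tens_inv H; subst.
  apply: (Dec_raw (g := TC c1 H1 ⊗ TC c2 H2)) => //.
  apply: Dec_tens; apply: IH' => /=; lia.
all: try (have [e1 e2] := hom1_st (proj1 H); simpl in e1, e2; subst).
- by apply: (Dec_raw (g := tA a b d)) => //; exact: Dec_A.
- by apply: (Dec_raw (g := tAi a b d)) => //; exact: Dec_Ai.
- by apply: (Dec_raw (g := tL a)) => //; exact: Dec_L.
- by apply: (Dec_raw (g := tLi a)) => //; exact: Dec_Li.
- by apply: (Dec_raw (g := tR a)) => //; exact: Dec_R.
- by apply: (Dec_raw (g := tRi a)) => //; exact: Dec_Ri.
- apply: (Dec_raw (g := tB a b)) => //; clear H.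
  move: IH'; case: a Hmu => [||a1 a2] Hmu IH'.
  + move: IH'; case: b Hmu => [||b1 b2] Hmu IH'.
    * exact: Dec_BXX.
    * apply: (Dec_teq (symmetry (BI2 X))); apply: Dec_comp; [exact: Dec_R | exact: Dec_Li].
    * apply: (Dec_teq (symmetry (hex2 X b1 b2))); apply: IH' => /=.
      have := sz_pos b1; have := sz_pos b2; nia.
  + apply: (Dec_teq (symmetry (BI1 b))); apply: Dec_comp; [exact: Dec_L | exact: Dec_Ri].
  + apply: (Dec_teq (symmetry (hex1 a1 a2 b))); apply: IH' => /=.
    have := sz_pos a1; have := sz_pos a2; have := sz_pos b; nia.
- by case: H.
Qed.

Lemma tens_cong x y x' y' (f f' : tc x y) (g g' : tc x' y') : f ≡ f' -> g ≡ g' -> f ⊗ g ≡ f' ⊗ g'.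
Proof. by move=> -> ->. Qed.
Lemma comp_cong x y z (f f' : tc x y) (g g' : tc y z) : g ≡ g' -> f ≡ f' -> g ∘ f ≡ g' ∘ f'.
Proof. by move=> -> ->. Qed.

Lemma sig2 i n : i.+2 <= n -> tsig i n ∘ tsig i n ≡ tid _.
Proof.
elim: i n => [|i IH] [|[|n]] //= Hn.
- rewrite -?assoc (cont (AiA _ _ _)) id_l (cont (tens_complV _ _ _)) syl tid_tens id_l AAi.
  by [].
all: rewrite tens_comprV -tid_tens; apply: tens_cong => //; exact: IH.
Qed.

Lemma sigcom i j n : i.+2 <= j -> j.+2 <= n -> tsig j n ∘ tsig i n ≡ tsig i n ∘ tsig j n.
Proof.
elim: i j n => [|i IH] [|[|j]] [|[|n]] //= Hij Hjn.
  rewrite (cont (symmetry (natA _ _ _))) -?assoc.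
  rewrite (tid_tens X X) (cont (swap_tens _ _)) -?assoc -(tid_tens X X).
  by rewrite -natAi !assoc.
- rewrite !tens_comprV; apply: tens_cong => //; exact: (IH j.+1 n.+1).
Qed.

Lemma conj_cancel x y (a : tc x y) (a' : tc y x) (u v : tc x x) :
  a' ∘ a ≡ tid _ -> a ∘ u ≡ a ∘ v -> u ≡ v.
Proof.
move=> H E; rewrite -(id_l u) -(id_l v) -H -!assoc E; by [].
Qed.

Lemma pentI w x y z : tAi (T w x) y z ∘ tAi w x (T y z) ≡
  (tAi w x y ⊗ tid z) ∘ (tAi w (T x y) z ∘ (tid w ⊗ tAi x y z)).
Proof.
set Y := (tAi w x y ⊗ tid z) ∘ (tAi w (T x y) z ∘ (tid w ⊗ tAi x y z)).
have XY : (tA w x (T y z) ∘ tA (T w x) y z) ∘ Y ≡ tid _.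
  rewrite /Y pent -?assoc (cont (tens_complV _ _ _)) AAi tid_tens id_l.
  by rewrite (cont (AAi _ _ _)) id_l tens_comprV AAi tid_tens.
transitivity (tAi (T w x) y z ∘ tAi w x (T y z) ∘ ((tA w x (T y z) ∘ tA (T w x) y z) ∘ Y)).
  by rewrite XY id_r.
by rewrite -?assoc (cont (AiA _ _ _)) id_l (cont (AiA _ _ _)) id_l.
Qed.


Lemma conj3 x y (a : tc x y) (p q r : tc x x) (P Q R : tc y y) :
  a ∘ p ≡ P ∘ a -> a ∘ q ≡ Q ∘ a -> a ∘ r ≡ R ∘ a -> a ∘ (p ∘ q ∘ r) ≡ P ∘ Q ∘ R ∘ a.
Proof.
move=> Hp Hq Hr; rewrite !assoc Hp -(assoc P a q) Hq (assoc P Q a).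
by rewrite -(assoc (P ∘ Q) a r) Hr assoc.
Qed.

Lemma conj_ybe x y (a : tc x y) (a' : tc y x) (u v : tc x x) (U V : tc y y) :
  a' ∘ a ≡ tid _ -> a ∘ u ≡ U ∘ a -> a ∘ v ≡ V ∘ a -> U ∘ V ∘ U ≡ V ∘ U ∘ V ->
  u ∘ v ∘ u ≡ v ∘ u ∘ v.
Proof.
move=> H Hu Hv HU; apply: (conj_cancel H).
by rewrite (conj3 Hu Hv Hu) (conj3 Hv Hu Hv) HU.
Qed.

Section YBE.
Variable c : obj.
Let b := tB X X.
Definition s0 := tA X X (T X c) ∘ ((b ⊗ tid (T X c)) ∘ tAi X X (T X c)).
Definition s1 := tid X ⊗ (tA X X c ∘ ((b ⊗ tid c) ∘ tAi X X c)).
Definition s0' := tA X X X ∘ ((b ⊗ tid X) ∘ tAi X X X).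
Definition s1' := tid X ⊗ b.
Definition al := tAi X (T X X) c ∘ (tid X ⊗ tAi X X c).
Definition al' := (tid X ⊗ tA X X c) ∘ tA X (T X X) c.

Lemma al_inv : al' ∘ al ≡ tid _.
Proof. by rewrite /al /al' -?assoc (cont (AAi _ _ _)) id_l tens_comprV AAi tid_tens. Qed.

Lemma al_s1 : al ∘ s1 ≡ (s1' ⊗ tid c) ∘ al.
Proof.
rewrite /al /s1 /s1' -?assoc tens_comprV -?assoc (cont (AiA _ _ _)) id_l.
rewrite tens_compr (cont (natAi _ _ _)); by rewrite !assoc.
Qed.

Lemma al_s0 : al ∘ s0 ≡ (s0' ⊗ tid c) ∘ al.
Proof.
have E : al ≡ (tA X X X ⊗ tid c) ∘ (tAi (T X X) X c ∘ tAi X X (T X c)).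
  rewrite pentI /al -?assoc (cont (tens_complV _ _ _)) AAi tid_tens id_l; by [].
rewrite E /s0 /s0' -?assoc (cont (AiA _ _ _)) id_l.
rewrite -(tid_tens X c) (cont (natAi _ _ _)) -?assoc.
rewrite !tens_compl -?assoc (cont (@tens_complV _ _ _ c (tAi X X X) (tA X X X))) AiA tid_tens id_l.
by [].
Qed.

Lemma ybe' : s0' ∘ s1' ∘ s0' ≡ s1' ∘ s0' ∘ s1'.
Proof.
have H : tA X X X ∘ tB X (T X X) ≡ s1' ∘ s0'.
  by rewrite hex2 /s1' /s0' -?assoc (cont (AAi _ _ _)) id_l.
have H2 : s0' ∘ (tA X X X ∘ tB X (T X X)) ≡ s0' ∘ s1' ∘ s0' by rewrite H assoc.
rewrite -H2 -H /s1' -assoc natB /s0' -?assoc (cont (AiA _ _ _)) id_l; by [].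
Qed.

Lemma ybe : s0 ∘ s1 ∘ s0 ≡ s1 ∘ s0 ∘ s1.
Proof.
apply: (conj_ybe al_inv al_s0 al_s1).
by rewrite !tens_complV ybe'.
Qed.
End YBE.

Lemma braid i n : i.+3 <= n -> tsig i n ∘ tsig i.+1 n ∘ tsig i n ≡ tsig i.+1 n ∘ tsig i n ∘ tsig i.+1 n.
Proof.
elim: i n => [|i IH] [|[|[|n]]] //= Hn.
- exact: (ybe (C n)).
- rewrite !tens_comprV; apply: tens_cong => //; exact: IH.
Qed.

Inductive mv (n : nat) : seq nat -> seq nat -> Prop :=
| mv_del u v i : i.+2 <= n -> mv n (u ++ i :: i :: v) (u ++ v)
| mv_com u v i j : i.+2 <= j -> j.+2 <= n -> mv n (u ++ i :: j :: v) (u ++ j :: i :: v)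
| mv_br u v i : i.+3 <= n -> mv n (u ++ [:: i, i.+1 & i :: v]) (u ++ [:: i.+1, i & i.+1 :: v]).

Definition weq n := clos_refl_sym_trans _ (mv n).

Lemma weq_refl n u : weq n u u. Proof. exact: rst_refl. Qed.
Lemma weq_sym n u v : weq n u v -> weq n v u. Proof. exact: rst_sym. Qed.
Lemma weq_trans n u v w : weq n u v -> weq n v w -> weq n u w. Proof. exact: rst_trans. Qed.
Lemma weq_mv n u v : mv n u v -> weq n u v. Proof. exact: rst_step. Qed.

Lemma weq_catl n s u v : weq n u v -> weq n (s ++ u) (s ++ v).
Proof.
elim=> {u v} [u v H|u|u v _ IH|u v w _ IH1 _ IH2].
- apply: weq_mv; case: H => [u' v' i Hi|u' v' i j H1 H2|u' v' i Hi]; rewrite !catA; by constructor.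
- exact: weq_refl.
- exact: weq_sym.
- exact: weq_trans IH1 IH2.
Qed.

Lemma weq_catr n s u v : weq n u v -> weq n (u ++ s) (v ++ s).
Proof.
elim=> {u v} [u v H|u|u v _ IH|u v w _ IH1 _ IH2].
- apply: weq_mv; case: H => [u' v' i Hi|u' v' i j H1 H2|u' v' i Hi]; rewrite -!catA /=; by constructor.
- exact: weq_refl.
- exact: weq_sym.
- exact: weq_trans IH1 IH2.
Qed.

Lemma weq_mono m n u v : m <= n -> weq m u v -> weq n u v.
Proof.
move=> Hmn; elim=> {u v} [u v H|u|u v _ IH|u v w _ IH1 _ IH2].
- apply: weq_mv; case: H => [u' v' i Hi|u' v' i j H1 H2|u' v' i Hi]; constructor=> //;
  exact: leq_trans Hmn.
- exact: weq_refl.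
- exact: weq_sym.
- exact: weq_trans IH1 IH2.
Qed.

Lemma comm1 n i s : (forall j, j \in s -> i.+2 <= j /\ j.+2 <= n) ->
  weq n (s ++ [:: i]) (i :: s).
Proof.
elim: s => [|j s IH] H /=; first exact: weq_refl.
have [h1 h2] := H j (mem_head _ _).
apply: weq_trans (_ : weq n (j :: i :: s) _).
  apply: (weq_catl [:: j]); apply: IH => j' Hj'; apply: H; by rewrite inE Hj' orbT.
apply: weq_sym; apply: weq_mv; exact: (mv_com [::] s h1 h2).
Qed.

Lemma comm2 n i s : i.+2 <= n -> (forall j, j \in s -> j.+2 <= i) ->
  weq n (s ++ [:: i]) (i :: s).
Proof.
move=> Hn; elim: s => [|j s IH] H /=; first exact: weq_refl.
have h1 := H j (mem_head _ _).
apply: weq_trans (_ : weq n (j :: i :: s) _).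
  apply: (weq_catl [:: j]); apply: IH => j' Hj'; apply: H; by rewrite inE Hj' orbT.
apply: weq_mv; exact: (mv_com [::] s h1 Hn).
Qed.

Fixpoint Dd k t := match t with 0 => [::] | t'.+1 => (k + t') :: Dd k t' end.

Lemma Dd_mem k t j : j \in Dd k t -> k <= j < k + t.
Proof.
elim: t => [|t IH] //=; rewrite inE => /orP [/eqP ->|/IH]; lia.
Qed.

Lemma Dd_split k a b : Dd k (a + b) = Dd (k + b) a ++ Dd k b.
Proof.
elim: a => [|a IH] //=; rewrite IH; congr (_ :: _); lia.
Qed.

Lemma Dd_last k t : Dd k t.+1 = Dd k.+1 t ++ [:: k].
Proof. by rewrite -(addn1 t) Dd_split /= addn0 addn1. Qed.

Lemma Dd_uniq k t : uniq (Dd k t).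
Proof.
elim: t => [|t IH] //=; rewrite IH andbT; apply/negP => /Dd_mem; lia.
Qed.

Fixpoint cw (c : seq nat) : seq nat :=
  match c with [::] => [::] | k :: c' => cw c' ++ Dd k (size c' - k) end.
Fixpoint cv (c : seq nat) : bool :=
  match c with [::] => true | k :: c' => (k <= size c') && cv c' end.
Fixpoint cstep (c : seq nat) (i : nat) : seq nat :=
  match c with
  | [::] => [::]
  | k :: c' => if i.+1 < k then k :: cstep c' i
               else if i.+1 == k then k.-1 :: c'
               else if i == k then k.+1 :: c'
               else k :: cstep c' i.-1
  end.

Lemma size_step c i : size (cstep c i) = size c.
Proof.
elim: c i => [|k c IH] i //=.
case: ifP => _ /=; first by rewrite IH.
case: ifP => _ //=; case: ifP => _ //=; by rewrite IH.
Qed.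

Lemma cv_step c i : cv c -> i.+2 <= size c -> cv (cstep c i).
Proof.
elim: c i => [|k c IH] i //= /andP [Hk Hc] Hi.
case: ifP => h1 /=.
  rewrite size_step Hk IH //; lia.
case: ifP => h2 /=.
  rewrite Hc andbT; lia.
case: ifP => h3 /=.
  rewrite Hc andbT; move/eqP: h3 => h3; lia.
rewrite size_step Hk IH //; move/eqP: h3 => h3; move/eqP: h2 => h2; lia.
Qed.

Lemma step_weq c i : cv c -> i.+2 <= size c -> weq (size c) (cw c ++ [:: i]) (cw (cstep c i)).
Proof.
elim: c i => [|k c IH] i //= /andP [Hk Hc] Hi.
set m := size c.
case: ifP => h1 /=.
- rewrite size_step -catA.
  apply: weq_trans (_ : weq m.+1 (cw c ++ i :: Dd k (m - k)) _).
    apply: weq_catl; apply: comm1 => j /Dd_mem; lia.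
  rewrite -cat1s catA; apply: weq_catr; apply: (weq_mono (leqnSn _)); apply: IH => //; lia.
case: ifP => h2 /=.
- move/eqP: h2 => h2; subst k.
  have -> : m - i = (m - i.+1).+1 by lia.
  by rewrite Dd_last -catA; apply: weq_refl.
case: ifP => h3 /=.
- move/eqP: h3 => h3; subst k.
  have -> : m - i = (m - i.+1).+1 by lia.
  rewrite Dd_last -!catA /=.
  apply: weq_mv; have H := @mv_del m.+1 (cw c ++ Dd i.+1 (m - i.+1)) [::] i.
  rewrite cats0 -catA /= in H; apply: H; lia.
- move/eqP: h3 => h3; move/eqP: h2 => h2.
  have Hki : k < i by lia.
  rewrite size_step -/m.
  have E : m - k = (m - i.+1) + (2 + (i.-1 - k)) by lia.
  rewrite E Dd_split (Dd_split k 2) /=.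
  have -> : k + (2 + (i.-1 - k)) = i.+1 by lia.
  have -> : k + (i.-1 - k) + 1 = i by lia.
  have -> : k + (i.-1 - k) + 0 = i.-1 by lia.
  set P := Dd i.+1 (m - i.+1); set Q := Dd k (i.-1 - k).
  (* cw c ++ (P ++ [:: i, i.-1 & Q]) ++ [:: i]  ~  cw (cstep c i.-1) ++ (P ++ [:: i, i.-1 & Q]) *)
  apply: weq_trans (_ : weq m.+1 (cw c ++ i.-1 :: (P ++ [:: i, i.-1 & Q])) _); last first.
    rewrite -cat1s catA; apply: weq_catr; apply: (weq_mono (leqnSn _)); apply: IH => //; lia.
  rewrite -catA; apply: weq_catl.
  apply: weq_trans (_ : weq m.+1 (P ++ [:: i, i.-1, i & Q]) _).
    rewrite -catA; apply: weq_catl.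
    rewrite -[X in weq _ _ X]/([:: i; i.-1] ++ i :: Q) -[X in weq _ X _]/([:: i; i.-1] ++ (Q ++ [:: i])).
    apply: weq_catl; apply: comm2; first lia.
    move=> j /Dd_mem; lia.
  apply: weq_trans (_ : weq m.+1 (P ++ [:: i.-1, i, i.-1 & Q]) _).
    apply: weq_sym; apply: weq_mv.
    have -> : i = i.-1.+1 by lia.
    rewrite -pred_Sn; apply: mv_br; lia.
  rewrite -cat1s -[X in weq _ X _]/(P ++ [:: i.-1] ++ [:: i, i.-1 & Q]) catA.
  rewrite -[X in weq _ _ X]/(([:: i.-1] ++ P) ++ [:: i, i.-1 & Q]).
  apply: weq_catr; apply: comm1 => j /Dd_mem; lia.
Qed.

Fixpoint cinit n := match n with 0 => [::] | n'.+1 => n' :: cinit n' end.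

Lemma size_cinit n : size (cinit n) = n.
Proof. by elim: n => //= n ->. Qed.

Lemma cv_cinit n : cv (cinit n).
Proof. by elim: n => //= n ->; rewrite size_cinit leqnn. Qed.

Lemma cw_cinit n : cw (cinit n) = [::].
Proof. by elim: n => //= n ->; rewrite size_cinit subnn. Qed.

Definition canon n w := cw (foldl cstep (cinit n) w).

Lemma cv_canon n w : all (fun i => i.+2 <= n) w -> cv (foldl cstep (cinit n) w) /\ size (foldl cstep (cinit n) w) = n.
Proof.
elim/last_ind: w => [|w j IHj]; first by rewrite cv_cinit size_cinit.
rewrite all_rcons foldl_rcons => /andP [Hj /IHj [H1 H2]]; rewrite size_step H2; split=> //.
by apply: cv_step; rewrite ?H2.
Qed.

Lemma canon_weq n w : all (fun i => i.+2 <= n) w -> weq n w (canon n w).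
Proof.
rewrite /canon; elim/last_ind: w => [|w i IH]; first by move=> _; rewrite /= cw_cinit; exact: weq_refl.
rewrite all_rcons => /andP [Hi Hw].
have [Hc Hs] := cv_canon Hw.
rewrite foldl_rcons -cats1.
apply: weq_trans (_ : weq n (cw (foldl cstep (cinit n) w) ++ [:: i]) _).
  by apply: weq_catr; apply: IH.
rewrite -{1}Hs; apply: step_weq => //; by rewrite Hs.
Qed.

Definition tr i k := if k == i then i.+1 else if k == i.+1 then i else k.
Definition swp (p : nat -> nat) i := fun k => if k == i then p i.+1 else if k == i.+1 then p i else p k.
Definition pos (w : seq nat) := [seq (true, i) | i <- w].
Fixpoint app p (w : seq nat) := match w with [::] => p | i :: w' => app (swp p i) w' end.

Lemma swpE p i k : swp p i k = p (tr i k).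
Proof. rewrite /swp /tr; by case: ifP => //; case: ifP. Qed.

Lemma trK i : involutive (tr i).
Proof.
move=> k; rewrite /tr; do ! case: eqP; lia.
Qed.

Lemma swp_inj p i : injective p -> injective (swp p i).
Proof. move=> Hp a b; rewrite !swpE => /Hp /(can_inj (trK i)); by []. Qed.

Lemma app_inj p w : injective p -> injective (app p w).
Proof. elim: w p => [|i w IH] p Hp //=; apply: IH; exact: swp_inj. Qed.

Lemma app_cat p u v : app p (u ++ v) = app (app p u) v.
Proof. by elim: u p => //= i u IH p. Qed.

Lemma cross_cat p u v : crossings p (pos (u ++ v)) = crossings p (pos u) ++ crossings (app p u) (pos v).
Proof. by elim: u p => //= i u IH p; rewrite IH. Qed.

Lemma app_far p w s : (forall i, i \in w -> i.+1 < s) -> forall j, s <= j -> app p w j = p j.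
Proof.
elim: w p => [|i w IH] p //= H j Hj.
rewrite IH //; last by move=> i' Hi'; apply: H; rewrite inE Hi' orbT.
have := H i (mem_head _ _); rewrite /swp; case: ifP => [/eqP E|_]; first lia.
case: ifP => [/eqP E|_] //; lia.
Qed.

Lemma range q s : injective q -> (forall j, s <= j -> q j = j) -> forall j, j < s -> q j < s.
Proof.
move=> Hq Hf j Hj; rewrite ltnNge; apply/negP => H.
have := Hf _ H => /Hq E; rewrite E in H; lia.
Qed.

Lemma cross_bound p w s : (forall j, j < s -> p j < s) -> (forall i, i \in w -> i.+1 < s) ->
  all (fun pr => pr.2 < s) (crossings p (pos w)).
Proof.
elim: w p => [|i w IH] p //= Hp H.
have Hi := H i (mem_head _ _).
apply/andP; split.
  rewrite /=; have h1 := Hp i; have h2 := Hp i.+1; lia.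
apply: IH; last by move=> i' Hi'; apply: H; rewrite inE Hi' orbT.
move=> j Hj; rewrite /swp; case: ifP => _; first (apply: Hp; lia).
case: ifP => _; apply: Hp; lia.
Qed.

Lemma crossD k t p M : p (k + t) = M -> (forall j, j < k + t -> p j < M) ->
  crossings p (pos (Dd k t)) = [seq (p j, M) | j <- Dd k t].
Proof.
elim: t p => [|t IH] p //= H1 H2.
have e : p (k + t).+1 = M by rewrite -addnS.
have lt : p (k + t) < M by apply: H2; lia.
rewrite e (minn_idPl (ltnW lt)) (maxn_idPr (ltnW lt)); congr (_ :: _).
rewrite IH.
- apply/eq_in_map => j /Dd_mem Hj.
  have -> : (j == k + t) = false by apply/eqP; lia.
  have -> : (j == (k + t).+1) = false by apply/eqP; lia.
  by [].
- by rewrite eqxx.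
- move=> j Hj.
  have -> : (j == k + t) = false by apply/eqP; lia.
  have -> : (j == (k + t).+1) = false by apply/eqP; lia.
  apply: H2; lia.
Qed.

Lemma cw_inv c : cv c ->
  [/\ uniq (crossings id (pos (cw c))), all (fun pr => pr.2 < size c) (crossings id (pos (cw c))),
      injective (app id (cw c)) & forall j, size c <= j -> app id (cw c) j = j].
Proof.
elim: c => [|k c IH] /=; first by split.
case/andP=> Hk /IH [U Bd Inj Fix].
set m := size c; set q := app id (cw c).
have Hq : q (k + (m - k)) = m by rewrite subnKC // /q Fix.
have Hr : forall j, j < k + (m - k) -> q j < m.
  by rewrite subnKC // => j; apply: range.
rewrite cross_cat (crossD Hq Hr).
split.
- rewrite cat_uniq U /=; apply/andP; split.
  + apply/hasPn => pr /mapP [j _ ->] /=; apply/negP => Hin.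
    by move/allP: Bd => /(_ _ Hin) /=; rewrite ltnn.
  + rewrite map_inj_uniq ?Dd_uniq // => a b [] /Inj; by [].
- rewrite all_cat; apply/andP; split.
  + by apply/allP => pr /(allP Bd) /= h; lia.
  + by apply/allP => pr /mapP [j _ ->] /=.
- by rewrite app_cat; apply: app_inj.
- move=> j Hj; rewrite app_cat (@app_far _ _ m.+1) //; first by rewrite Fix //; lia.
  by move=> i /Dd_mem; lia.
Qed.

Lemma minimal_cw c : cv c -> minimal (pos (cw c)).
Proof.
move=> /cw_inv [U _ _ _]; rewrite /minimal U andbT /positive /pos all_map.
by apply/allP.
Qed.

Lemma tW_mv n u v : mv n u v -> tW n u ≡ tW n v.
Proof.
case=> [u' v' i Hi|u' v' i j H1 H2|u' v' i Hi]; rewrite !tW_cat; apply: comp_cong => //=.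
- by rewrite -assoc sig2 // id_r.
- by rewrite -!assoc sigcom.
- by rewrite -!assoc (assoc (tsig i n)) braid // !assoc.
Qed.

Lemma tW_weq n u v : weq n u v -> tW n u ≡ tW n v.
Proof.
elim=> {u v} [u v H|u|u v _ IH|u v w _ IH1 _ IH2].
- exact: tW_mv.
- by [].
- by rewrite IH.
- by rewrite IH1 IH2.
Qed.

Lemma rho_sig i n : i.+2 <= n -> rho (tcell (tsig i n)) = [:: (true, i)].
Proof.
elim: i n => [|i IH] [|[|n]] //= Hn.
- by rewrite IH.
Qed.

Lemma rho_tW n w : vw n w -> rho (tcell (tW n w)) = pos w.
Proof.
elim: w => [|i w IH] //= /andP [Hi Hw].
by rewrite rho_sig // IH.
Qed.

Lemma rho_cat m k : rho (tcell (cat m k)) = [::].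
Proof. by elim: m => //= m ->. Qed.
Lemma rho_uncat m k : rho (tcell (uncat m k)) = [::].
Proof. by elim: m => //= m ->. Qed.

Lemma rho_nrm x : rho (tcell (nrm x)) = [::].
Proof. elim: x => //= a IHa b IHb; by rewrite IHa IHb rho_cat. Qed.
Lemma rho_dnm x : rho (tcell (dnm x)) = [::].
Proof. elim: x => //= a IHa b IHb; by rewrite IHa IHb rho_uncat. Qed.

Lemma vw_cw c : cv c -> vw (size c) (cw c).
Proof.
elim: c => [|k c IH] //= /andP [Hk /IH Hc].
rewrite vw_cat; apply/andP; split.
- apply/allP=> i /(allP Hc) /= h; lia.
- apply/allP=> i /Dd_mem /= h; lia.
Qed.

Theorem proposition3p8 (f : cell) (x y : obj) :
  hom1 f x y -> plus f ->
  exists f' : cell, [/\ hom1 f' x y, plus f', minimal (rho f') & iso_plus f f'].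
Proof.
move=> H P.
pose F := (TC f (conj H P) : tc x y).
have [n [w [NX [DY [h1 h2 h3 h4]]]]] := @Dec_all (mu f).+1 x y F (ltnSn _).
have [Hc Hs] := cv_canon h3.
have Hv : vw n (canon n w) by rewrite /canon -{1}Hs; apply: vw_cw.
exists (tcell (DY ∘ tW n (canon n w) ∘ NX)); split.
- exact: (proj1 (tcP _)).
- exact: (proj2 (tcP _)).
- rewrite /= h1 h2 rho_nrm rho_dnm rho_tW // cats0 /canon; exact: minimal_cw.
- have : F ≡ DY ∘ tW n (canon n w) ∘ NX by rewrite h4 (tW_weq (canon_weq h3)).
  by [].
Qed.
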